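(* Let $p \ge 3$ and let $B_p$ be the graph obtained from the complete bipartite graph $K_{p,p}$ by deleting the edges of a perfect matching. Then $B_p$ is $(K_4, \text{diamond}, \text{paw}, \text{co-claw}, \text{co-diamond})$-free, $B_p$ is $2$-colourable, and $B_p$ has a frozen $p$-colouring.
   Context: All graphs are finite and simple. A $k$-colouring is a proper colouring with colours $\{1,\dots,k\}$. A $k$-colouring is frozen if, for every vertex $v$, all $k$ colours appear in the closed neighbourhood of $v$. $\mathcal{H}$-free means no induced subgraph isomorphic to a member of $\mathcal{H}$. The diamond is $K_4$ minus an edge; the paw is a triangle with a pendant vertex attached to one triangle vertex; the co-claw is $K_3+K_1$; the co-diamond is $K_2+2K_1$ (one edge plus two isolated vertices). *)

(* Defs.v *)
From mathcomp Require Import all_boot all_order.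
Set Implicit Arguments. Unset Strict Implicit. Unset Printing Implicit Defensive.

Definition simple_graph (V : finType) (e : rel V) : Prop :=
  (forall x y, e x y = e y x) /\ (forall x, ~~ e x x).

Definition induced_sub (W : finType) (eH : rel W) (V : finType) (eG : rel V) : Prop :=
  exists f : W -> V, injective f /\
    forall x y, x != y -> eG (f x) (f y) = eH x y.

Definition from_edges (s : seq (nat * nat)) : rel 'I_4 :=
  fun x y => ((nat_of_ord x, nat_of_ord y) \in s) || ((nat_of_ord y, nat_of_ord x) \in s).

Definition K4_g : rel 'I_4 := from_edges [:: (0,1); (0,2); (0,3); (1,2); (1,3); (2,3)].
(* diamond = K4 minus the edge {0,1} *)
Definition diamond_g : rel 'I_4 := from_edges [:: (0,2); (0,3); (1,2); (1,3); (2,3)].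
(* paw = triangle 0,1,2 plus pendant vertex 3 attached to 0 *)
Definition paw_g : rel 'I_4 := from_edges [:: (0,1); (0,2); (1,2); (0,3)].
(* co-claw = K3 + K1 : triangle 0,1,2 and isolated vertex 3 *)
Definition coclaw_g : rel 'I_4 := from_edges [:: (0,1); (0,2); (1,2)].
(* co-diamond = K2 + 2K1 : edge 0-1, isolated vertices 2 and 3 *)
Definition codiamond_g : rel 'I_4 := from_edges [:: (0,1)].

Definition lemma2_free (V : finType) (e : rel V) : Prop :=
  ~ induced_sub K4_g e /\ ~ induced_sub diamond_g e /\ ~ induced_sub paw_g e /\
  ~ induced_sub coclaw_g e /\ ~ induced_sub codiamond_g e.

(* k-colourings: colours are 'I_k (i.e. {0,...,k-1} in place of {1,...,k}). *)
Definition proper_colouring (V : finType) (e : rel V) (k : nat) (c : V -> 'I_k) : Prop :=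
  forall x y, e x y -> c x != c y.

Definition colourable (V : finType) (e : rel V) (k : nat) : Prop :=
  exists c : V -> 'I_k, proper_colouring e c.

Definition frozen_colouring (V : finType) (e : rel V) (k : nat) (c : V -> 'I_k) : Prop :=
  proper_colouring e c /\
  forall (v : V) (i : 'I_k), exists u : V, ((u == v) || e v u) /\ c u = i.

(* B_p: K_{p,p} minus a perfect matching. Vertices (i, side) with i < p;
   (i,a) ~ (j,b) iff a, b are different sides and i != j. *)
Definition Bp_adj (p : nat) : rel ('I_p * bool) :=
  fun x y => (x.2 != y.2) && (x.1 != y.1).
Arguments Bp_adj p : clear implicits.

(* Main.v *)
Require Import Defs.
From mathcomp Require Import all_boot all_order.

Lemma no_tri p (x y z : 'I_p * bool) :
  Bp_adj p x y -> Bp_adj p y z -> Bp_adj p x z -> False.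
Proof.
by case: x y z => [? [|]] [? [|]] [? [|]]; rewrite /Bp_adj /= ?andbF.
Qed.

Lemma no_codiam p (x0 x1 x2 x3 : 'I_p * bool) :
  Bp_adj p x0 x1 -> ~~ Bp_adj p x0 x2 -> ~~ Bp_adj p x1 x2 ->
  ~~ Bp_adj p x0 x3 -> ~~ Bp_adj p x1 x3 -> ~~ Bp_adj p x2 x3 -> x2 != x3 -> False.
Proof.
case: x0 x1 x2 x3 => [i0 [|]] [i1 [|]] [i2 [|]] [i3 [|]];
rewrite /Bp_adj /= ?andbF ?andbT ?negbK //= -?pair_eqE /= ?andbT ?andTb.
all: move=> h01.
all: repeat (move=> /eqP ?); subst.
all: by rewrite ?eqxx in h01.
Qed.

Lemma tri_sub (eH : rel 'I_4) p (a b c : 'I_4) :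
  a != b -> b != c -> a != c -> eH a b -> eH b c -> eH a c ->
  ~ induced_sub eH (Bp_adj p).
Proof.
move=> ab bc ac hab hbc hac [f [_ H]].
apply: (@no_tri p (f a) (f b) (f c)); by rewrite H.
Qed.

Theorem lemma2 (p : nat) (hp : 3 <= p) :
  simple_graph (Bp_adj p) /\
  lemma2_free (Bp_adj p) /\
  colourable (Bp_adj p) 2 /\
  (exists c : 'I_p * bool -> 'I_p, frozen_colouring (Bp_adj p) c).
Proof.
split.
  split; first by move=> x y; rewrite /Bp_adj eq_sym [x.1 == _]eq_sym.
  by move=> x; rewrite /Bp_adj eqxx.
split.
  split; first by apply: (@tri_sub _ _ (@Ordinal 4 0 isT) (@Ordinal 4 1 isT) (@Ordinal 4 2 isT)).
  split; first by apply: (@tri_sub _ _ (@Ordinal 4 0 isT) (@Ordinal 4 2 isT) (@Ordinal 4 3 isT)).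
  split; first by apply: (@tri_sub _ _ (@Ordinal 4 0 isT) (@Ordinal 4 1 isT) (@Ordinal 4 2 isT)).
  split; first by apply: (@tri_sub _ _ (@Ordinal 4 0 isT) (@Ordinal 4 1 isT) (@Ordinal 4 2 isT)).
  move=> [f [inj H]].
  apply: (@no_codiam p (f (@Ordinal 4 0 isT)) (f (@Ordinal 4 1 isT)) (f (@Ordinal 4 2 isT)) (f (@Ordinal 4 3 isT)));
    rewrite ?H //.
  by rewrite (inj_eq inj).
split.
  exists (fun x => if x.2 then (@Ordinal 2 1 isT) else (@Ordinal 2 0 isT)).
  by case=> [? [|]] [? [|]]; rewrite /Bp_adj /=.
exists (fun x => x.1); split.
  by move=> x y /andP[].
move=> [i a] k.
case: (eqVneq k i) => [->|ki].
  by exists (i, a); rewrite eqxx.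
exists (k, ~~ a); split => //; apply/orP; right.
by rewrite /Bp_adj /= (eq_sym i) ki andbT; case: a.
Qed.
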